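(* Let $\{\Psi^{(j)}\}_{j\ge0}$ be a sequence of Harris ergodic Markov chains, chain $j$ having transition function $K_j$ and invariant probability measure $\Pi_j$. Suppose that for each $j$ there are a function $V_j\ge0$, numbers $\lambda^{(j)}<1$, $L^{(j)}<\infty$, $\varepsilon^{(j)}>0$, $d^{(j)}>2L^{(j)}/(1-\lambda^{(j)})$ and a probability measure $Q_j$ with $\int V_j(x')K_j(x,dx')\le\lambda^{(j)}V_j(x)+L^{(j)}$ for all $x$ and $K_j(x,\cdot)\ge\varepsilon^{(j)}Q_j(\cdot)$ whenever $V_j(x)<d^{(j)}$, and let $\hat\rho^{(j)}=(1-\varepsilon^{(j)})^{r_j}\vee\Big(\frac{1+2L^{(j)}+\lambda^{(j)}d^{(j)}}{1+d^{(j)}}\Big)^{1-r_j}\{1+2(\lambda^{(j)}d^{(j)}+L^{(j)})\}^{r_j}$ for some $r_j\in(0,1)$ chosen so that $\hat\rho^{(j)}<1$. Suppose there is a subsequence $\{j_l\}$ along which at least one of the following holds: (i) $\lambda^{(j_l)}\to1$; (ii) $L^{(j_l)}\to\infty$, while $\varepsilon^{(j_l)}$ is bounded away from 1 and $\lambda^{(j_l)}$ is bounded away from 0; (iii) $\varepsilon^{(j_l)}\to0$. Then $\hat\rho^{(j_l)}\to1$. *)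

(* Defs.v *)
From HB Require Import structures.
From mathcomp Require Import all_boot all_order all_algebra.
From mathcomp Require Import all_classical all_reals all_analysis.
Set Implicit Arguments. Unset Strict Implicit. Unset Printing Implicit Defensive.
Import Order.TTheory GRing.Theory Num.Theory.
Import numFieldNormedType.Exports.
Local Open Scope classical_set_scope.
Local Open Scope ring_scope.

Section Defs.
Context {R : realType} {d : measure_display} {T : measurableType d}.

Fixpoint kiter (K : R.-pker T ~> T) (n : nat) (x : T) (A : set T) : \bar R :=
  match n with
  | 0 => \d_x A
  | n'.+1 => (\int[K x]_y kiter K n' y A)%E
  end.

Definition invariant (K : R.-pker T ~> T) (Pi : probability T R) : Prop :=
  forall A, measurable A -> (\int[Pi]_x K x A)%E = Pi A.

Definition harris_ergodic (K : R.-pker T ~> T) (Pi : probability T R) : Prop :=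
  invariant K Pi /\
  forall x (e : R), 0 < e -> exists N : nat, forall n, (N <= n)%N ->
    forall A, measurable A -> (`| kiter K n x A - Pi A | < e%:E)%E.

Definition drift (K : R.-pker T ~> T) (V : T -> R) (lam L : R) : Prop :=
  forall x, (\int[K x]_y (V y)%:E <= (lam * V x + L)%:E)%E.

Definition minorization (K : R.-pker T ~> T) (V : T -> R) (dd eps : R)
  (Q : probability T R) : Prop :=
  forall x, V x < dd -> forall A, measurable A -> (eps%:E * Q A <= K x A)%E.
End Defs.

Definition rho_hat {R : realType} (lam L eps dd r : R) : R :=
  Num.max ((1 - eps) `^ r)
    (((1 + 2 * L + lam * dd) / (1 + dd)) `^ (1 - r) *
     (1 + 2 * (lam * dd + L)) `^ r).

(* Main.v *)
Require Import Defs.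
From HB Require Import structures.
From mathcomp Require Import all_boot all_order all_algebra.
From mathcomp Require Import all_classical all_reals all_analysis.
From mathcomp Require Import lra.
Import Order.TTheory GRing.Theory Num.Theory.
Import numFieldNormedType.Exports.
Local Open Scope classical_set_scope.
Local Open Scope ring_scope.

Lemma L_ge0 (R : realType) (d : measure_display) (T : measurableType d)
  (K : R.-pker T ~> T) (Pi : probability T R) (V : T -> R) (lam L : R) :
  lam < 1 -> measurable_fun setT V -> (forall x, 0 <= V x) -> drift K V lam L -> 0 <= L.
Proof.
move=> l1 Vm V0 HD.
have [[x0 _]|nT] := pselect (exists x : T, True); last first.
  exfalso; have h : [set: T] = set0.
    by apply/seteqP; split=> x //= _; apply: nT; exists x.
  by move: (probability_setT Pi); rewrite h measure0 => /eqP; rewrite eq_sym onee_eq0.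
have key : forall x c, 0 <= c -> (forall y, c <= V y) -> c <= lam * V x + L.
  move=> x c c0 cV; rewrite -lee_fin (le_trans _ (HD x))//.
  have -> : c%:E = (\int[K x]_(y in setT) (cst c%:E) y)%E.
    have := @integral_cst _ _ _ (K x) setT measurableT c%:E. move=> ->. by rewrite prob_kernel mule1.
  apply: ge0_le_integral => //=.
  - by apply/measurable_realfun.measurable_EFinP.
  - by move=> y _; rewrite lee_fin.

set m := inf (range V).
have ne : range V !=set0 by exists (V x0), x0.
have lb : lbound (range V) 0 by move=> _ [y _ <-].
have m0 : 0 <= m by apply: lb_le_inf.
have mV : forall y, m <= V y.
  by move=> y; apply: (ge_inf (ex_intro _ 0 lb)); exists y.
have H := key _ _ m0 mV.
case: (leP lam 0) => l0.
  have := key x0 _ (lexx 0) V0.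
  have := mulr_le0_ge0 l0 (V0 x0); lra.
have h2 : (m - L) / lam <= m.
  apply: lb_le_inf => // _ [y _ <-].
  rewrite ler_pdivrMr // mulrC; have := H y; lra.
move: h2; rewrite ler_pdivrMr // => h2.
have : 0 <= (1 - lam) * m by rewrite mulr_ge0 // subr_ge0 ltW.
rewrite mulrBl mul1r; lra.
Qed.

Section RealLemmas.
Variable R : realType.
Implicit Types lam L eps dd r : R.

Lemma AB lam L dd : 0 <= L -> 0 <= lam -> lam < 1 -> 2 * L / (1 - lam) < dd ->
  [/\ 0 <= dd, 0 < (1 + 2 * L + lam * dd) / (1 + dd),
      (1 + 2 * L + lam * dd) / (1 + dd) <= 1,
      lam <= (1 + 2 * L + lam * dd) / (1 + dd) &
      1 <= 1 + 2 * (lam * dd + L)].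
Proof.
move=> L0 l0 l1 hd.
have l1' : 0 < 1 - lam by rewrite subr_gt0.
move: hd; rewrite ltr_pdivrMr // => hd.
have d0 : 0 <= dd by nra.
have ld : 0 <= lam * dd by rewrite mulr_ge0.
have d1 : 0 < 1 + dd by lra.
split => //.
- by rewrite divr_gt0 //; lra.
- by rewrite ler_pdivrMr // mul1r; nra.
- by rewrite ler_pdivlMr //; nra.
- lra.
Qed.

Lemma lowerA lam L eps dd r : 0 <= L -> 0 <= lam -> lam < 1 ->
  2 * L / (1 - lam) < dd -> 0 < r < 1 ->
  ((1 + 2 * L + lam * dd) / (1 + dd)) `^ (1 - r) *
     (1 + 2 * (lam * dd + L)) `^ r <= rho_hat lam L eps dd r.
Proof.
move=> L0 l0 l1 hd /andP[r0 r1].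
by rewrite /rho_hat le_max lexx orbT.
Qed.

Lemma rho_ge_lam lam L eps dd r : 0 <= L -> 0 <= lam -> lam < 1 ->
  2 * L / (1 - lam) < dd -> 0 < r < 1 -> lam <= rho_hat lam L eps dd r.
Proof.
move=> L0 l0 l1 hd hr.
have [d0 A0 A1 lA B1] := AB lam L dd L0 l0 l1 hd.
apply: le_trans (lowerA lam L eps dd r L0 l0 l1 hd hr).
move: hr => /andP[r0 r1].
move: A0 A1 lA B1.
move: ((1 + 2 * L + lam * dd) / (1 + dd)) (1 + 2 * (lam * dd + L)) => A B A0 A1 lA B1.
have hB : 1 <= B `^ r by rewrite -(powRr0 B) ler_powR // ltW.
have hA : A <= A `^ (1 - r) by rewrite ger1_powR ?A0 ?A1 // lerBlDr lerDl ltW.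
apply: (le_trans lA); apply: (le_trans hA).
by rewrite -[leLHS]mulr1 ler_wpM2l // powR_ge0.
Qed.

Lemma rho_ge_eps lam L eps dd r : 0 < eps -> eps <= 1 -> 0 < r < 1 ->
  1 - eps <= rho_hat lam L eps dd r.
Proof.
move=> e0 e1 /andP[r0 r1].
rewrite /rho_hat le_max; apply/orP; left.
have [->|ne] := eqVneq eps 1.
  by rewrite subrr powR_ge0.
have e1' : eps < 1 by rewrite lt_neqAle ne e1.
apply: ger1_powR; last lra.
apply/andP; split; lra.
Qed.

Lemma case2 lam L eps dd r (e c c' : R) : 0 < e < 1 -> 0 < c < 1 ->
  0 < eps <= c -> 0 < c' <= lam -> 0 <= L -> lam < 1 ->
  2 * L / (1 - lam) < dd -> 0 < r < 1 -> rho_hat lam L eps dd r < 1 ->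
  ((c'^-1) `^ ((ln (1 - e) / ln (1 - c))^-1) - 1) / 2 <= L ->
  1 - e <= rho_hat lam L eps dd r.
Proof.
move=> /andP[e0 e1] /andP[c0 c1] /andP[eps0 epsc] /andP[c'0 c'l] L0 l1 hd hr
  hrho hM.
have lne : ln (1 - e) < 0 by rewrite ln_lt0 //; apply/andP; split; lra.
have lnc : ln (1 - c) < 0 by rewrite ln_lt0 //; apply/andP; split; lra.
move: hM; set δ := ln (1 - e) / ln (1 - c) => hM.
have δ0 : 0 < δ.
  by rewrite /δ -mulrNN -invrN divr_gt0 // oppr_gt0.
have l0 : 0 <= lam by lra.
have [r0 r1] : 0 < r /\ r < 1 by apply/andP.
case: (leP r δ) => rd.
  rewrite /rho_hat le_max; apply/orP; left.
  have h : (1 - c) `^ δ = 1 - e.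
    rewrite /powR gt_eqF; last lra.
    by rewrite /δ -mulrA mulVf ?lt_eqF // mulr1 lnK // posrE; lra.
  rewrite -h; apply: (@le_trans _ _ ((1 - c) `^ r)).
    by apply: ger_powR => //; apply/andP; split; lra.
  by apply: (ge0_ler_powR (ltW r0)); rewrite ?nnegrE; lra.
exfalso.
have [d0 A0 A1 lA B1] := AB lam L dd L0 l0 l1 hd.
have := lowerA lam L eps dd r L0 l0 l1 hd hr.
have ld : 0 <= lam * dd by rewrite mulr_ge0.
have hB2 : 1 + 2 * L <= 1 + 2 * (lam * dd + L) by lra.
move: A0 A1 lA B1 hB2.
move: ((1 + 2 * L + lam * dd) / (1 + dd)) (1 + 2 * (lam * dd + L)) => A B A0 A1 lA B1 hB2 hP.
set X := (c'^-1) `^ δ^-1.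
have XB : X <= B.
  apply: (le_trans _ hB2); move: hM; rewrite ler_pdivrMr // /X; lra.
have hA : c' <= A `^ (1 - r).
  by rewrite (le_trans c'l) // (le_trans lA) // ger1_powR ?A0 ?A1 //; lra.
have hB : c'^-1 <= B `^ r.
  apply: (@le_trans _ _ (B `^ δ)); last by rewrite ler_powR // ltW.
  have -> : c'^-1 = X `^ δ.
    by rewrite /X -powRrM mulVf ?gt_eqF // powRr1 // invr_ge0 ltW.
  by apply: (ge0_ler_powR (ltW δ0)); rewrite ?nnegrE ?powR_ge0 //; lra.
have : c' * c'^-1 <= A `^ (1 - r) * B `^ r.
  by apply: ler_pM => //; [exact: ltW | rewrite invr_ge0 ltW].
rewrite mulfV ?gt_eqF // => h1.
have := le_trans h1 hP; lra.
Qed.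

End RealLemmas.
Theorem proposition1 (R : realType)
  (dsp : nat -> measure_display) (T : forall j, measurableType (dsp j))
  (K : forall j, R.-pker (T j) ~> (T j))
  (Pi : forall j, probability (T j) R)
  (V : forall j, T j -> R)
  (lam L eps dd r : nat -> R)
  (Q : forall j, probability (T j) R)
  (HK : forall j, harris_ergodic (K j) (Pi j))
  (HVm : forall j, measurable_fun setT (V j))
  (HV0 : forall j x, 0 <= V j x)
  (Hlam : forall j, lam j < 1)
  (Heps : forall j, 0 < eps j)
  (Hd : forall j, 2 * L j / (1 - lam j) < dd j)
  (Hdrift : forall j, drift (K j) (V j) (lam j) (L j))
  (Hminor : forall j, minorization (K j) (V j) (dd j) (eps j) (Q j))
  (Hr : forall j, 0 < r j < 1)
  (Hrho : forall j, rho_hat (lam j) (L j) (eps j) (dd j) (r j) < 1)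
  (jl : nat -> nat) (Hjl : forall l, (jl l < jl l.+1)%N)
  (Hcase :
     ((fun l => lam (jl l)) @ \oo --> (1 : R))
     \/ ((fun l => L (jl l)) @ \oo --> +oo
         /\ (exists c : R, c < 1 /\ forall l, eps (jl l) <= c)
         /\ (exists c : R, 0 < c /\ forall l, c <= lam (jl l)))
     \/ ((fun l => eps (jl l)) @ \oo --> (0 : R))) :
  (fun l => rho_hat (lam (jl l)) (L (jl l)) (eps (jl l)) (dd (jl l)) (r (jl l)))
    @ \oo --> (1 : R).
Proof.
have L0 j : 0 <= L j := @L_ge0 R _ (T j) (K j) (Pi j) (V j) (lam j) (L j) (Hlam j) (HVm j) (HV0 j) (Hdrift j).
set rho := fun l => _.
suff S : forall e : R, 0 < e < 1 -> \forall l \near \oo, 1 - e <= rho l.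
  apply/cvgrPdist_lt => e e0.
  set e' := Num.min (e / 2) (1 / 2).
  have e'0 : 0 < e' < 1.
    rewrite /e'; apply/andP; split.
      by rewrite lt_min; apply/andP; split; lra.
    by apply: (@le_lt_trans _ _ (1/2)); [rewrite ge_min lexx orbT | lra].
  have e'e : e' <= e / 2 by rewrite /e' ge_min lexx.
  have Sn := S _ e'0.
  near=> l.
  have h : 1 - e' <= rho l by near: l.
  have := Hrho (jl l); rewrite -/(rho l) => h1.
  rewrite ger0_norm; [lra | lra].
  Unshelve. all: end_near.
move=> e /andP[e0 e1].
case: Hcase => [H1|[[HL [[c [c1 Hc]] [c' [c'0 Hc']]]]|H3]].
- have Hn := cvgr_gt _ H1.
  near=> l.
  have h1 : 1 - e < lam (jl l) by near: l; apply: Hn; lra.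
  apply: (@le_trans _ _ (lam (jl l))); first lra.
  apply: rho_ge_lam => //; first lra.
  Unshelve. all: end_near.
- have c0 : 0 < c by apply: (lt_le_trans (Heps (jl 0%N))).
  set M := (((c'^-1) `^ ((ln (1 - e) / ln (1 - c))^-1) - 1) / 2).
  have Hn := (cvgryPge _).1 HL M.
  near=> l.
  have hM : M <= L (jl l) by near: l; apply: Hn.
  rewrite /rho; apply: (@case2 R _ _ _ _ _ e c c') => //.
  + by rewrite e0 e1.
  + by rewrite c0 c1.
  + by rewrite Heps Hc.
  + by rewrite c'0 Hc'.
  Unshelve. all: end_near.
- have Hn := cvgr_lt _ H3.
  near=> l.
  have h1 : eps (jl l) < e by near: l; apply: Hn.
  apply: (@le_trans _ _ (1 - eps (jl l))); first lra.
  apply: rho_ge_eps => //; lra.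
  Unshelve. all: end_near.
Qed.
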